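(* Let $G=(V,D)$ be a directed graph and $J=J(\psi_G)$. Let $R_{\lambda_{kl}}$ be the row of $J$ for the edge $(k,l)\in D$ and $R_s$ the row for $s$. Perform the row operations $R_s\to R_s-\frac{\lambda_{kl}}{2s}R_{\lambda_{kl}}$ for every $(k,l)\in D$, followed by $R_s\to 2R_s$. Afterwards the entries of $R_s$ are as follows: the entry in column $K_{ii}$ is $2$; the entry in column $K_{ij}$ with $i\neq j$ and $(i,j)\in D$ is $-\lambda_{ij}$; the entry in column $K_{ij}$ with $i\neq j$ and $i,j$ not adjacent is $0$.
   Context: A directed graph $G=(V,D)$ has edge set $D\subseteq V\times V$ of ordered pairs $(i,j)$, $i\neq j$. $\Lambda$ is the $V\times V$ matrix with indeterminate entries $\lambda_{ij}$ for $(i,j)\in D$ and zeros elsewhere, and $s$ is a further indeterminate. Let $\psi_G(\Lambda,s)=s(I-\Lambda)(I-\Lambda)^T=K$. The transposed Jacobian $J=J(\psi_G)$ has rows indexed by $\{\lambda_{kl}:(k,l)\in D\}\cup\{s\}$ and columns indexed by entries $K_{ij}$ of the symmetric matrix $K$ (so $K_{ij}$ and $K_{ji}$ index the same column). Its entries are $\partial K_{ij}/\partial\theta$. *)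

(* Defs.v *)
From HB Require Import structures.
From mathcomp Require Import all_boot all_order all_algebra.
From mathcomp Require Import fraction.
From mathcomp Require Import mpoly.
Set Implicit Arguments. Unset Strict Implicit. Unset Printing Implicit Defensive.
Import Order.TTheory GRing.Theory Num.Theory.
Local Open Scope ring_scope.

(* Indeterminates: one variable for every ordered pair (k,l) of vertices
   (index mxvec_index k l), plus one variable s (the last index).
   Only the variables of edges of D actually occur (Lambda is zero elsewhere). *)
Notation nvars n := (n * n).+1.

Definition lam_idx n (k l : 'I_n) : 'I_(nvars n) :=
  widen_ord (leqnSn _) (mxvec_index k l).
Definition s_idx n : 'I_(nvars n) := ord_max.

Notation "x %:F" := (@FracField.tofrac _ x).

Section Jacobian.
Variables (R : numFieldType) (n : nat) (D : rel 'I_n).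

Definition polyT := {mpoly R[nvars n]}.

Definition s_var : polyT := 'X_(s_idx n).

Definition lam (k l : 'I_n) : polyT := if D k l then 'X_(lam_idx k l) else 0.

Definition Lambda : 'M[polyT]_n := \matrix_(k, l) lam k l.

(* K = psi_G(Lambda, s) = s (I - Lambda)(I - Lambda)^T *)
Definition Kmx : 'M[polyT]_n :=
  s_var *: ((1%:M - Lambda) *m (1%:M - Lambda)^T).

(* entry of the transposed Jacobian J in the row of variable theta and column K_ij *)
Definition Jentry (theta : 'I_(nvars n)) (i j : 'I_n) : polyT :=
  mderiv theta (Kmx i j).

Definition R_s (i j : 'I_n) : {fraction polyT} := (Jentry (s_idx n) i j)%:F.
Definition R_lam (k l : 'I_n) (i j : 'I_n) : {fraction polyT} :=
  (Jentry (lam_idx k l) i j)%:F.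

(* R_s after the operations R_s -> R_s - lambda_kl/(2s) R_lambda_kl for every
   (k,l) in D (the rows R_lambda_kl being unchanged, the order is irrelevant),
   followed by R_s -> 2 R_s. *)
Definition R_s_reduced (i j : 'I_n) : {fraction polyT} :=
  2 * (R_s i j - \sum_(k : 'I_n) \sum_(l : 'I_n | D k l)
                   ((lam k l)%:F / (2 * s_var%:F)) * R_lam k l i j).

End Jacobian.

(* Main.v *)
Require Import Defs.
From HB Require Import structures.
From mathcomp Require Import all_boot all_order all_algebra.
From mathcomp Require Import fraction.
From mathcomp Require Import mpoly.
From mathcomp Require Import ring.
Import Order.TTheory GRing.Theory Num.Theory.
Local Open Scope ring_scope.

Lemma mderivX1 (R : nzRingType) N (i j : 'I_N) :
  mderiv j ('X_i : {mpoly R[N]}) = (i == j)%:R.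
Proof.
rewrite mderivX mnm1E; case: eqP => [->|_]; last by rewrite scale0r.
have -> : (U_(j) - U_(j) = 0)%MM by apply/mnmP => k; rewrite mnmBE mnm0E subnn.
by rewrite mpolyX0 scale1r.
Qed.

Lemma lam_idx_inj n (k l k' l' : 'I_n) :
  (lam_idx k l == lam_idx k' l') = (k == k') && (l == l').
Proof.
apply/eqP/andP => [|[/eqP -> /eqP ->]] //.
move/(congr1 val) => /= /val_inj /(congr1 val) /= /val_inj/enum_rank_inj [-> ->].
by [].
Qed.

Lemma lam_s_neq n (k l : 'I_n) : (lam_idx k l == s_idx n) = false.
Proof.
apply/negbTE; rewrite -val_eqE /= neq_ltn; apply/orP; left.
by have := ltn_ord (mxvec_index k l).
Qed.

Section Main.
Variables (R : numFieldType) (n : nat) (D : rel 'I_n).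
Local Notation P := (polyT R n).
Local Notation lamD := (@lam R n D).

Definition Mx (i m : 'I_n) : P := (i == m)%:R - lamD i m.
Definition Amx (i j : 'I_n) : P := \sum_m Mx i m * Mx j m.

Lemma dlam th (k l : 'I_n) :
  mderiv th (lamD k l) = if D k l then (lam_idx k l == th)%:R else 0.
Proof. by rewrite /lam; case: (D k l); rewrite ?mderivX1 ?mderiv0. Qed.

Lemma dnat th (b : bool) : mderiv th (b%:R : P) = 0.
Proof. by rewrite -mpolyC_nat mderivC. Qed.

Lemma KmxE i j : @Kmx R n D i j = s_var R n * Amx i j.
Proof.
rewrite /Kmx !mxE /Amx; congr (_ * _); apply: eq_bigr => m _.
by rewrite !mxE /Mx.
Qed.

Lemma dMx th i m : mderiv th (Mx i m) = - mderiv th (lamD i m).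
Proof. by rewrite /Mx mderivB dnat sub0r. Qed.

Lemma dAmx th i j : mderiv th (Amx i j) =
  \sum_m (- mderiv th (lamD i m) * Mx j m + Mx i m * - mderiv th (lamD j m)).
Proof.
rewrite /Amx (big_morph _ (@mderivD _ _ th) (@mderiv0 _ _ th)); apply: eq_bigr => m _.
by rewrite mderivM !dMx.
Qed.

Lemma Js i j : @Jentry R n D (s_idx n) i j = Amx i j.
Proof.
rewrite /Jentry KmxE mderivM /s_var mderivX1 eqxx mul1r dAmx big1 ?mulr0 ?addr0 //.
by move=> m _; rewrite !dlam !lam_s_neq; case: (D _ _); case: (D _ _);
  rewrite ?oppr0 ?mul0r ?mulr0 ?addr0.
Qed.

Lemma Jl k l i j : @Jentry R n D (lam_idx k l) i j =
  s_var R n * mderiv (lam_idx k l) (Amx i j).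
Proof.
by rewrite /Jentry KmxE mderivM /s_var mderivX1 eq_sym lam_s_neq mul0r add0r.
Qed.

Lemma lam_dlam k l i m : lamD k l * mderiv (lam_idx k l) (lamD i m) =
  if (k == i) && (l == m) then lamD i m else 0.
Proof.
rewrite dlam lam_idx_inj (eq_sym i k) (eq_sym m l) /lam.
case: (k =P i) => [->|_]; case: (l =P m) => [->|_];
  rewrite ?eqxx ?andbF /=; repeat case: ifP => _;
  by rewrite ?mulr0 ?mulr1 ?mul0r.
Qed.

Lemma sum_delta2 (G : P) i m (H : 'I_n -> 'I_n -> P) :
  (forall k l, H k l = if (k == i) && (l == m) then G else 0) ->
  \sum_k \sum_l H k l = G.
Proof.
move=> hH; rewrite (bigD1 i) //= [X in _ + X]big1 ?addr0.
  rewrite (bigD1 m) //= [X in _ + X]big1 ?addr0; first by rewrite hH !eqxx.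
  by move=> l nl; rewrite hH eqxx (negbTE nl).
by move=> k nk; apply: big1 => l _; rewrite hH (negbTE nk).
Qed.

Lemma sum_d (F : 'I_n -> P) i : \sum_m (i == m)%:R * F m = F i.
Proof.
rewrite (bigD1 i) //= eqxx mul1r big1 ?addr0 // => m nm.
by rewrite eq_sym (negbTE nm) mul0r.
Qed.

Lemma key i j :
  2 * Amx i j - \sum_k \sum_(l | D k l) lamD k l * mderiv (lam_idx k l) (Amx i j)
  = 2 * (i == j)%:R - lamD i j - lamD j i.
Proof.
have -> : \sum_k \sum_(l | D k l) lamD k l * mderiv (lam_idx k l) (Amx i j)
   = \sum_m (- (lamD i m * Mx j m) - Mx i m * lamD j m).
  transitivity (\sum_k \sum_l \sum_m
     (- (lamD k l * mderiv (lam_idx k l) (lamD i m)) * Mx j m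
      - Mx i m * (lamD k l * mderiv (lam_idx k l) (lamD j m)))).
    apply: eq_bigr => k _; rewrite big_mkcond /=; apply: eq_bigr => l _.
    case: ifP => Dkl.
      rewrite dAmx mulr_sumr; apply: eq_bigr => m _; ring.
    have l0 : lamD k l = 0 by rewrite /lam Dkl.
    symmetry; apply: big1 => m _.
    by rewrite l0 !mul0r oppr0 mul0r mulr0 subr0.
  transitivity (\sum_m \sum_k \sum_l
     (- (lamD k l * mderiv (lam_idx k l) (lamD i m)) * Mx j m
      - Mx i m * (lamD k l * mderiv (lam_idx k l) (lamD j m)))).
    under eq_bigr => k _ do rewrite exchange_big.
    by rewrite exchange_big.
  apply: eq_bigr => m _.
  under eq_bigr => k _ do rewrite big_split /=.
  rewrite big_split /=; congr (_ + _).
    apply: (@sum_delta2 _ i m) => k l; rewrite lam_dlam; case: ifP => _.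
      by rewrite mulNr.
    by rewrite oppr0 mul0r.
  under eq_bigr => k _ do rewrite sumrN.
  rewrite sumrN; congr (- _).
  apply: (@sum_delta2 _ j m) => k l; rewrite lam_dlam; case: ifP => _ //.
  by rewrite mulr0.
rewrite /Amx mulr_sumr -sumrB.
transitivity (\sum_m ((i == m)%:R * (2 * (j == m)%:R) - (i == m)%:R * lamD j m
   - (j == m)%:R * lamD i m)).
  apply: eq_bigr => m _; rewrite /Mx; ring.
rewrite !sumrB !sum_d (eq_sym j i); ring.
Qed.

End Main.

Lemma gen1 (F : fieldType) (a b c t : F) : b != 0 -> t != 0 ->
  a / (t * b) * (b * c) = a * c / t.
Proof. by move=> hb ht; field; rewrite hb ht. Qed.

Lemma gen2 (F : fieldType) (a c t : F) : t != 0 ->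
  t * (a - c / t) = t * a - c.
Proof. by move=> ht; field; rewrite ht. Qed.

Lemma R_s_reducedE (R : numFieldType) (n : nat) (D : rel 'I_n) i j :
  @R_s_reduced R n D i j = (2 * (i == j)%:R - @lam R n D i j - @lam R n D j i)%:F.
Proof.
have s0 : (s_var R n)%:F != 0.
  rewrite tofrac_eq0; apply/eqP => h.
  have := congr1 (mcoeff U_(s_idx n)) h; rewrite mcoeffX eqxx mcoeff0 => /eqP.
  by rewrite oner_eq0.
have e2 : ((2 : polyT R n))%:F = 2 by rewrite tofracMn tofrac1.
have t0 : (2 : {fraction polyT R n}) != 0.
  rewrite -e2 tofrac_eq0.
  rewrite -mpolyC_nat mpolyC_eq0 pnatr_eq0 //.
have term : forall k l, (@lam R n D k l)%:F / (2 * (s_var R n)%:F) * @R_lam R n D k l i j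
   = (@lam R n D k l * mderiv (lam_idx k l) (@Amx R n D i j))%:F / 2.
  move=> k l; rewrite /R_lam Jl !tofracM.
  by apply: gen1.
rewrite /R_s_reduced /R_s Js.
under eq_bigr => k _ do under eq_bigr => l _ do rewrite term.
under eq_bigr => k _ do rewrite -mulr_suml -rmorph_sum.
rewrite -mulr_suml -rmorph_sum -key tofracB tofracM e2.
by apply: gen2.
Qed.

Theorem lemma3p3 (R : numFieldType) (n : nat) (D : rel 'I_n)
  (irrD : forall i : 'I_n, ~~ D i i) :
  (forall i : 'I_n, @R_s_reduced R n D i i = 2) /\
  (forall i j : 'I_n, i != j -> D i j -> ~~ D j i ->
     @R_s_reduced R n D i j = - (@lam R n D i j)%:F) /\
  (forall i j : 'I_n, i != j -> ~~ D i j -> ~~ D j i ->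
     @R_s_reduced R n D i j = 0).
Proof.
have l0 : forall i j, ~~ D i j -> @lam R n D i j = 0.
  by move=> i j /negbTE h; rewrite /lam h.
split; [|split].
- move=> i; rewrite R_s_reducedE eqxx l0 // !subr0 mulr1.
  by rewrite tofracMn tofrac1.
- move=> i j nij _ hji; rewrite R_s_reducedE (negbTE nij) (l0 j i) // subr0.
  by rewrite mulr0 sub0r tofracN.
- move=> i j nij hij hji; rewrite R_s_reducedE (negbTE nij) !l0 //.
  by rewrite mulr0 !subr0 tofrac0.
Qed.
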